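(* Let $\mathcal{X}$ be a set, $p\ge1$, $0<\alpha\le1$, $\kappa_1$ a positive definite kernel on $\mathcal{X}^p$ and $\kappa_2$ a positive definite kernel on $\mathcal{X}$. Let $\mathbf{x},\mathbf{x}'$ be time series in $\mathcal{X}$ of lengths $n,n'>p$, with $\mathbf{K}_1,\mathbf{K}_2,\Delta,g,f,C_{n,n'},\varphi_\kappa$ as in the context. Let $\mathbf{G}_1,\mathbf{G}_2\in\mathbf{S}_N^+$ satisfy $\mathbf{G}_1\preceq\mathbf{K}_1$ and $\mathbf{G}_2\preceq\mathbf{K}_1+\mathbf{K}_2$, and set $\varepsilon_1=\mathbf{K}_1-\mathbf{G}_1$, $\varepsilon_2=\mathbf{K}_1+\mathbf{K}_2-\mathbf{G}_2$. Then $$e^{-\varphi_\kappa(\mathbf{x},\mathbf{x}')}\le e^{-C_{n,n'}-f(\mathbf{G}_1,\mathbf{G}_2)}\le(1+\rho)\,e^{-\varphi_\kappa(\mathbf{x},\mathbf{x}')},$$ where $\rho=\exp\big((1-\alpha)\|\nabla g(\mathbf{G}_1)\|\,\|\varepsilon_1\|+\alpha\|\nabla g(\mathbf{G}_2)\|\,\|\varepsilon_2\|\big)-1$, with $\nabla g(Q)=(Q+\Delta^{-1})^{-1}$ and $\|\cdot\|$ the Frobenius norm.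
   Context: For $\mathbf{x}=(x_1,\dots,x_n)$, $\mathbf{x}_i^j=(x_i,\dots,x_j)$; $X=(\mathbf{x}_1^p,\mathbf{x}_2^{p+1},\dots,\mathbf{x}_{n-p}^{n-1})$ and $Y=(x_{p+1},\dots,x_n)$; $X',Y'$ likewise from $\mathbf{x}'$. For a tuple $\mathbf{v}=(v_1,\dots,v_m)$ and kernel $\kappa$, $\mathbf{K}^\kappa(\mathbf{v})=[\kappa(v_i,v_j)]_{i,j\le m}$; $\cdot$ is concatenation. $N=n+n'-2p$, $\mathbf{K}_1=\mathbf{K}^{\kappa_1}(X\cdot X')$, $\mathbf{K}_2=\mathbf{K}^{\kappa_2}(Y\cdot Y')$. $\Delta$ is the $N\times N$ diagonal matrix with first $n-p$ diagonal entries $\frac{1}{2(n-p)}$ and last $n'-p$ entries $\frac{1}{2(n'-p)}$. $\mathbf{S}_N^+$ is the cone of $N\times N$ symmetric positive semidefinite matrices; $A\preceq B$ means $B-A\in\mathbf{S}_N^+$. $g(Q)=\log|Q+\Delta^{-1}|$ ($|\cdot|$ the determinant), $f(Q,R)=(1-\alpha)g(Q)+\alpha g(R)$, $C_{n,n'}=(n-p)\log(2(n-p))+(n'-p)\log(2(n'-p))$, and $\varphi_\kappa(\mathbf{x},\mathbf{x}')=C_{n,n'}+f(\mathbf{K}_1,\mathbf{K}_1+\mathbf{K}_2)$. *)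

(* Defs.v *)
From HB Require Import structures.
From mathcomp Require Import all_boot all_order all_algebra.
From mathcomp Require Import reals sequences exp.
From mathcomp Require Import zify.
Import Order.TTheory GRing.Theory Num.Theory.
Local Open Scope ring_scope.

Section Defs.
Variable R : realType.

(* positive definite kernel (kernel-methods sense): symmetric, and every
   Gram matrix is positive semidefinite *)
Definition pd_kernel {T : Type} (k : T -> T -> R) : Prop :=
  (forall x y, k x y = k y x) /\
  forall (m : nat) (v : 'I_m -> T) (c : 'I_m -> R),
    0 <= \sum_(i < m) \sum_(j < m) c i * c j * k (v i) (v j).

Definition psd {m : nat} (A : 'M[R]_m) : Prop :=
  A^T = A /\ forall u : 'cV[R]_m, 0 <= (u^T *m A *m u) 0 0.

Definition loewner_le {m : nat} (A B : 'M[R]_m) : Prop := psd (B - A).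

Definition gram {T : Type} {m : nat} (k : T -> T -> R) (v : 'I_m -> T) : 'M[R]_m :=
  \matrix_(i, j) k (v i) (v j).

Definition frob {m : nat} (A : 'M[R]_m) : R :=
  Num.sqrt (\sum_(i < m) \sum_(j < m) A i j ^+ 2).

End Defs.
Arguments pd_kernel {R T}.
Arguments psd {R m}.
Arguments loewner_le {R m}.
Arguments gram {R T m}.
Arguments frob {R m}.

Definition tconcat {T : Type} {m k : nat} (v : 'I_m -> T) (w : 'I_k -> T)
  : 'I_(m + k) -> T :=
  fun i => match split i with inl a => v a | inr b => w b end.

Lemma win_lt (n p i j : nat) : (i < n - p -> j < p -> i + j < n)%N.
Proof. move=> hi hj; lia. Qed.

Lemma tgt_lt (n p i : nat) : (i < n - p -> i + p < n)%N.
Proof. move=> hi; lia. Qed.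

(* X : windows x_{i+1}^{i+p} (0-indexed: x_i, ..., x_{i+p-1}), i < n - p *)
Definition windows {X : Type} {n : nat} (p : nat) (x : 'I_n -> X)
  : 'I_(n - p) -> {ffun 'I_p -> X} :=
  fun i => [ffun j : 'I_p => x (Ordinal (@win_lt n p i j (ltn_ord i) (ltn_ord j)))].

(* Y : targets x_{i+p+1} (0-indexed: x_{i+p}), i < n - p *)
Definition targets {X : Type} {n : nat} (p : nat) (x : 'I_n -> X) : 'I_(n - p) -> X :=
  fun i => x (Ordinal (@tgt_lt n p i (ltn_ord i))).

Section Phi.
Variable R : realType.

Definition Delta (n n' p : nat) : 'M[R]_((n - p) + (n' - p)) :=
  diag_mx (\row_(i < (n - p) + (n' - p))
     match split i with
     | inl _ => (2 * (n - p)%:R)^-1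
     | inr _ => (2 * (n' - p)%:R)^-1
     end).

Definition gfun {n n' p : nat} (Q : 'M[R]_((n - p) + (n' - p))) : R :=
  ln (\det (Q + invmx (Delta n n' p))).

Definition grad_g {n n' p : nat} (Q : 'M[R]_((n - p) + (n' - p)))
  : 'M[R]_((n - p) + (n' - p)) :=
  invmx (Q + invmx (Delta n n' p)).

Definition ffun_ {n n' p : nat} (alpha : R) (Q S : 'M[R]_((n - p) + (n' - p))) : R :=
  (1 - alpha) * gfun Q + alpha * gfun S.

Definition Cnn (n n' p : nat) : R :=
  (n - p)%:R * ln (2 * (n - p)%:R) + (n' - p)%:R * ln (2 * (n' - p)%:R).

Definition K1 {X : Type} {n n' p : nat} (kappa1 : {ffun 'I_p -> X} -> {ffun 'I_p -> X} -> R)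
  (x : 'I_n -> X) (x' : 'I_n' -> X) : 'M[R]_((n - p) + (n' - p)) :=
  gram kappa1 (tconcat (windows p x) (windows p x')).

Definition K2 {X : Type} {n n' p : nat} (kappa2 : X -> X -> R)
  (x : 'I_n -> X) (x' : 'I_n' -> X) : 'M[R]_((n - p) + (n' - p)) :=
  gram kappa2 (tconcat (targets p x) (targets p x')).

Definition phi_kappa {X : Type} {n n' p : nat} (alpha : R)
  (kappa1 : {ffun 'I_p -> X} -> {ffun 'I_p -> X} -> R) (kappa2 : X -> X -> R)
  (x : 'I_n -> X) (x' : 'I_n' -> X) : R :=
  Cnn n n' p + ffun_ alpha (K1 kappa1 x x') (K1 kappa1 x x' + K2 kappa2 x x').

End Phi.
Arguments Delta {R}.
Arguments gfun {R n n' p}.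
Arguments grad_g {R n n' p}.
Arguments ffun_ {R n n' p}.
Arguments Cnn {R}.
Arguments K1 {R X n n' p}.
Arguments K2 {R X n n' p}.
Arguments phi_kappa {R X n n' p}.

(* Main.v *)
Require Import Defs.
From HB Require Import structures.
From mathcomp Require Import all_boot all_order all_algebra.
From mathcomp Require Import reals sequences exp.
Import Order.TTheory GRing.Theory Num.Theory.
From mathcomp Require Import ring lra.
Local Open Scope ring_scope.

Set Implicit Arguments. Unset Strict Implicit.
Section S.
Variable R : realType.

Lemma schur_block n (a : R) (B : 'M[R]_(1,n)) (C : 'M[R]_(n,1)) (D : 'M[R]_n) :
  a != 0 ->
  block_mx 1%:M 0 (-a^-1 *: C) 1%:M *m block_mx a%:M B C D
    *m block_mx 1%:M (-a^-1 *: B) 0 1%:M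
  = block_mx a%:M 0 0 (D - a^-1 *: (C *m B)).
Proof.
move=> a0.
rewrite !mulmx_block !mul1mx !mul0mx !mulmx0 !mulmx1 ?addr0 ?add0r.
rewrite mul_mx_scalar scalerA mulrN mulfV // scaleN1r addNr mul0mx add0r.
rewrite mul_scalar_mx scalerA mulrN mulfV // scaleN1r addNr.
rewrite -scalemxAl scaleNr addrC.
by [].
Qed.

Definition qf n (A : 'M[R]_n) (u : 'cV[R]_n) : R := (u^T *m A *m u) 0 0.
Definition posdef n (A : 'M[R]_n) :=
  A^T = A /\ forall u : 'cV[R]_n, u != 0 -> 0 < qf A u.

Lemma qf_congr n (L A : 'M[R]_n) v : qf (L *m A *m L^T) v = qf A (L^T *m v).
Proof. by rewrite /qf trmx_mul trmxK !mulmxA. Qed.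

Lemma qf_block n (a : R) (B : 'M[R]_(1,n)) (C : 'M[R]_(n,1)) (D : 'M[R]_n)
  (w : 'M[R]_1) (v : 'cV[R]_n) :
  qf (block_mx a%:M B C D) (col_mx w v) =
  (w^T *m a%:M *m w) 0 0 + (w^T *m B *m v) 0 0 + (v^T *m C *m w) 0 0 + qf D v.
Proof.
rewrite /qf tr_col_mx mul_row_block mul_row_col !mulmxDl.
rewrite !mxE; ring.
Qed.

Lemma qf_diag n (a : R) (S : 'M[R]_n) v :
  qf (block_mx a%:M 0 0 S) (col_mx (0 : 'M_1) v) = qf S v.
Proof. by rewrite qf_block !mulmx0 !mul0mx !mxE /= !add0r. Qed.


Lemma chol n (P : 'M[R]_n) : posdef P ->
  exists L : 'M[R]_n, L \in unitmx /\ L *m P *m L^T = 1%:M.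
Proof.
elim: n P => [|n IH] P [Ps Pp].
  exists 1%:M; split; first by rewrite unitmxE det_mx00 unitr1.
  by apply/matrixP => [[]].
move: P Ps Pp; change (forall P : 'M[R]_(1+n), P^T = P ->
  (forall u, u != 0 -> 0 < qf P u) ->
  exists L : 'M[R]_(1+n), L \in unitmx /\ L *m P *m L^T = 1%:M).
move=> P Ps Pp.
move: Ps Pp; rewrite -[P]submxK.
move: (ulsubmx P) (ursubmx P) (dlsubmx P) (drsubmx P) => A0 B C D.
rewrite [A0]mx11_scalar; move: (A0 0 0) => a Ps Pp.
move: Ps; rewrite tr_block_mx tr_scalar_mx => /eq_block_mx [_ hCB hBC hD].
have apos : 0 < a.
  have := Pp (col_mx 1%:M 0).
  rewrite qf_block trmx1 trmx0 !mul1mx !mulmx1 !mul0mx !mulmx0 /qf !mulmx0 !mxE /=.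
  rewrite !addr0 mulr1n; apply.
  rewrite col_mx_eq0 negb_and; apply/orP; left.
  apply/eqP => /matrixP/(_ 0 0); rewrite !mxE /= => /eqP; rewrite oner_eq0.
  done.
have a0 : a != 0 by rewrite gt_eqF.
set E0 : 'M[R]_(1+n) := block_mx 1%:M 0 (-a^-1 *: C) 1%:M.
have hE0T : E0^T = block_mx 1%:M (-a^-1 *: B) 0 1%:M.
  by rewrite /E0 tr_block_mx !trmx1 trmx0 linearZ /= hCB.
set S := D - a^-1 *: (C *m B).
have hE : E0 *m block_mx a%:M B C D *m E0^T = block_mx a%:M 0 0 S.
  by rewrite hE0T schur_block.
have Spd : posdef S.
  split.
    by rewrite /S linearD linearN linearZ /= trmx_mul hCB hBC hD.
  move=> v v0.
  rewrite -(qf_diag a) -hE qf_congr.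
  apply: Pp.
  by rewrite hE0T mul_block_col !mul1mx mul0mx !add0r col_mx_eq0 negb_and v0 orbT.
have [L' [L'u hL']] := IH _ Spd.
set t := (Num.sqrt a)^-1.
exists (block_mx t%:M 0 0 L' *m E0); split.
  rewrite unitmx_mul; apply/andP; split.
    by rewrite unitmxE det_ublock det_scalar1 unitrM -!unitmxE L'u andbT unitfE invr_eq0 sqrtr_eq0 -ltNge.
  by rewrite unitmxE det_lblock !det1 mulr1 unitr1.
set F := block_mx t%:M 0 0 L'.
rewrite trmx_mul !mulmxA.
have -> : F *m E0 *m block_mx a%:M B C D *m E0^T = F *m (E0 *m block_mx a%:M B C D *m E0^T).
  by rewrite !mulmxA.
rewrite hE /F.
rewrite tr_block_mx !trmx0 tr_scalar_mx !mulmx_block !mulmx0 !mul0mx ?addr0 ?add0r.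
rewrite hL' !mul0mx -!scalar_mxM.
have -> : t * a * t = 1.
  rewrite /t mulrC mulrA -expr2 exprVn sqr_sqrtr ?(ltW apos) //.
  by rewrite mulVf.
by rewrite -scalar_mx_block.
Qed.

Lemma scaleE m n (t : R) (A : 'M[R]_(m,n)) i j : (t *: A) i j = t * A i j.
Proof. by rewrite mxE. Qed.
Lemma oppE m n (A : 'M[R]_(m,n)) i j : (- A) i j = - A i j.
Proof. by rewrite mxE. Qed.
Lemma trE m n (A : 'M[R]_(m,n)) i j : (A^T) i j = A j i.
Proof. by rewrite mxE. Qed.

Lemma qf11 (t : R) (x : R) : ((t%:M)^T *m x%:M *m t%:M : 'M[R]_1) 0 0 = t * x * t.
Proof. by rewrite tr_scalar_mx -!scalar_mxM mxE mulr1n. Qed.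

Lemma core n (M : 'M[R]_n) : psd M ->
  1 <= \det (1%:M + M) /\ \det (1%:M + M) <= expR (\tr M).
Proof.
elim: n M => [|n IH] M [Ms Mp].
  rewrite det_mx00 /mxtrace big_ord0 expR0; lra.
move: M Ms Mp; change (forall M : 'M[R]_(1+n), M^T = M ->
  (forall u : 'cV[R]_(1+n), 0 <= (u^T *m M *m u) 0 0) ->
  1 <= \det (1%:M + M) /\ \det (1%:M + M) <= expR (\tr M)).
move=> M Ms Mp.
move: Ms Mp; rewrite -[M]submxK.
move: (ulsubmx M) (ursubmx M) (dlsubmx M) (drsubmx M) => A0 B C D.
rewrite [A0]mx11_scalar; move: (A0 0 0) => m Ms Mp.
move: Ms; rewrite tr_block_mx tr_scalar_mx => /eq_block_mx [_ hCB hBC hD].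
have Mq : forall (t : R) v, 0 <= t * m * t + t * (B *m v) 0 0 + t * (B *m v) 0 0 + qf D v.
  move=> t v; have := Mp (col_mx t%:M v); rewrite -/(qf _ _) qf_block qf11.
  rewrite tr_scalar_mx mul_scalar_mx -scalemxAl mul_mx_scalar !scaleE.
  by rewrite -hBC -trmx_mul trE.
have m0 : 0 <= m.
  have := Mq 1 0; rewrite mulmx0 /qf trmx0 !mul0mx !mxE.
  by rewrite !mulr0 !addr0 mul1r mulr1.
rewrite [X in X + _](scalar_mx_block 1 n) add_block_mx.
set a := 1 + m.
have apos : 0 < a by rewrite /a; lra.
have a0 : a != 0 by rewrite gt_eqF.
have Ea : (1 : R)%:M + m%:M = a%:M :> 'M[R]_1 by rewrite -raddfD.
rewrite Ea.
set N := D - a^-1 *: (C *m B).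
have hS := schur_block B C (1%:M + D) a0.
have hdet : \det (block_mx a%:M B C (1%:M + D)) = a * \det (1%:M + N).
  move: hS => /(congr1 determinant).
  rewrite !det_mulmx det_lblock det_ublock !det1 !mulr1 !mul1r det_ublock det_scalar1.
  by rewrite /N addrA.
have Npsd : psd N.
  split.
    by rewrite /N linearD linearN linearZ /= trmx_mul hCB hBC hD.
  move=> v.
  set s := (B *m v) 0 0.
  have hq : (v^T *m N *m v) 0 0 = qf D v - a^-1 * (s * s).
    rewrite /N mulmxBr mulmxBl mxE -/(qf D v).  rewrite oppE; congr (_ - _).
    rewrite -scalemxAr -scalemxAl scaleE -hBC -mulmxA -(mulmxA _ B) (mulmxA v^T) -trmx_mul.
    rewrite [B *m v]mx11_scalar tr_scalar_mx -scalar_mxM mxE mulr1n.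
    by [].
  rewrite hq.
  have := Mq (- (a^-1 * s)) v; rewrite -/s.
  have ha1 : a^-1 * a = 1 by rewrite mulVf.
  move: (a^-1) ha1 => k ha1.
  have e : k * (s * s) = k * (s * s) * (k * a) by rewrite ha1 mulr1.
  have e2 : 0 <= (k * s) * (k * s) by rewrite -expr2 sqr_ge0.
  rewrite /a in e e2 *.
  move: (qf D v) => q.
  lra.
have [IH1 IH2] := IH N Npsd.
have htr : \tr N <= \tr D.
  rewrite /N raddfB /= mxtraceZ mxtrace_mulC.
  have : 0 <= \tr (B *m C).
    rewrite /mxtrace big_ord1 mxE; apply: sumr_ge0 => j _.
    by rewrite -hBC trE -expr2 sqr_ge0.
  have hai : 0 < a^-1 by rewrite invr_gt0.
  nra.
rewrite !add0r hdet mxtrace_block mxtrace_scalar mulr1n expRD.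
split.
  have : 1 <= a by rewrite /a; lra.
  move=> h1; nra.
apply: ler_pM.
- lra.
- apply: le_trans IH1; lra.
- by rewrite /a expR_ge1Dx.
- apply: (le_trans IH2); by rewrite ler_expR.
Qed.

Lemma key n (P E : 'M[R]_n) : posdef P -> psd E ->
  0 < \det P /\ \det P <= \det (P + E) /\
  \det (P + E) <= \det P * expR (\tr (invmx P *m E)).
Proof.
move=> Ppd [Es Ep].
have [L [Lu hL]] := chol Ppd.
set M := L *m E *m L^T.
have Mpsd : psd M.
  split; first by rewrite /M !trmx_mul trmxK Es mulmxA.
  by move=> u; have := Ep (L^T *m u); rewrite -/(qf E _) -qf_congr.
have [c1 c2] := core Mpsd.
have hPE : L *m (P + E) *m L^T = 1%:M + M by rewrite mulmxDr mulmxDl hL.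
have dL : \det L != 0 by rewrite -unitfE -unitmxE.
have hdP : \det L * \det P * \det L = 1.
  by move: hL => /(congr1 determinant); rewrite !det_mulmx det_tr det1.
have hdPE : \det L * \det (P + E) * \det L = \det (1%:M + M).
  by move: hPE => /(congr1 determinant); rewrite !det_mulmx det_tr.
have hinv : invmx P = L^T *m L.
  have h1 : P *m (L^T *m L) = 1%:M.
    apply: (can_inj (mulKmx Lu)); rewrite mulmx1 !mulmxA hL mul1mx.
    by [].
  have [Pu _] := mulmx1_unit h1.
  by rewrite -[RHS](mulKmx Pu) h1 mulmx1.
have htr : \tr M = \tr (invmx P *m E).
  by rewrite /M mxtrace_mulC hinv !mulmxA.
rewrite -htr.
have dd : 0 < \det L * \det L.
  by rewrite lt_def mulf_neq0 //= -expr2 sqr_ge0.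
have e0 : 0 < expR (\tr M) := expR_gt0 _.
move: hdP hdPE dd c1 c2 e0; move: (\det L) (\det P) (\det (P + E)) (\det (1%:M + M)) (expR (\tr M)).
move=> d dP dPE X e hdP hdPE dd c1 c2 e0.
have hq : d * d * dP = 1 by rewrite -hdP; ring.
have hq2 : d * d * dPE = X by rewrite -hdPE; ring.
move: (d * d) dd hq hq2 => q qp hq hq2.
have dPp : 0 < dP by nra.
split => //; split; nra.
Qed.

Lemma cs_sq (I : finType) (x y : I -> R) :
  (\sum_i x i * y i) ^+ 2 <= (\sum_i x i ^+ 2) * (\sum_i y i ^+ 2).
Proof.
set a := \sum_i x i ^+ 2; set b := \sum_i x i * y i; set c := \sum_i y i ^+ 2.
have H t : 0 <= t ^+ 2 * a - 2 * t * b + c.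
  have -> : t ^+ 2 * a - 2 * t * b + c = \sum_i (t * x i - y i) ^+ 2.
    rewrite /a /b /c !mulr_sumr -sumrB -big_split /=.
    by apply: eq_bigr => i _; ring.
  by apply: sumr_ge0 => i _; rewrite sqr_ge0.
have a0 : 0 <= a by apply: sumr_ge0 => i _; rewrite sqr_ge0.
have [ha|an0] := eqVneq a 0.
  have hx : forall i, x i = 0.
    move=> i; apply/eqP; rewrite -sqrf_eq0; apply/eqP.
    by apply: (psumr_eq0P (P := predT) (fun i _ => sqr_ge0 (x i))).
  rewrite ha mul0r.
  by rewrite /b big1 ?expr0n ?mul0r // => i _; rewrite hx mul0r.
have ap : 0 < a by rewrite lt_def an0 a0.
have := H (b / a).
have e : b / a * a = b by rewrite mulfVK.
move: (b / a) e => t e.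
nra.
Qed.

Lemma cs (I : finType) (x y : I -> R) :
  \sum_i x i * y i <= Num.sqrt (\sum_i x i ^+ 2) * Num.sqrt (\sum_i y i ^+ 2).
Proof.
rewrite -sqrtrM; last by apply: sumr_ge0 => i _; rewrite sqr_ge0.
apply: (le_trans (ler_norm _)).
by rewrite -sqrtr_sqr ler_sqrt ?cs_sq // mulr_ge0 // sumr_ge0 // => i _; rewrite sqr_ge0.
Qed.

Lemma tr_frob n (A B : 'M[R]_n) : \tr (A *m B) <= frob A * frob B.
Proof.
rewrite /mxtrace; under eq_bigr do rewrite mxE.
rewrite /frob (exchange_big _ _ _ _ _ (fun i j => B i j ^+ 2)) !pair_big /=.
exact: cs.
Qed.

Lemma addE m n (A B : 'M[R]_(m,n)) i j : (A + B) i j = A i j + B i j.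
Proof. by rewrite mxE. Qed.

Lemma posdef_unit n (P : 'M[R]_n) : posdef P -> P \in unitmx.
Proof.
move=> /chol [L [Lu hL]].
have [h _] := mulmx1_unit hL.
by move: h; rewrite unitmx_mul => /andP [].
Qed.

Lemma posdef_inv n (P : 'M[R]_n) : posdef P -> posdef (invmx P).
Proof.
move=> Ppd; have Pu := posdef_unit Ppd; case: Ppd => Ps Pp.
split; first by rewrite trmx_inv Ps.
move=> u u0.
have w0 : invmx P *m u != 0.
  by apply: contraNneq u0 => h; rewrite -(mulKVmx Pu u) h mulmx0.
have := Pp _ w0.
rewrite /qf trmx_mul trmx_inv Ps -!mulmxA (mulmxA P) mulmxV // mul1mx.
by [].
Qed.

Lemma psd_posdef_add n (G D : 'M[R]_n) : psd G -> posdef D -> posdef (G + D).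
Proof.
move=> [Gs Gp] [Ds Dp]; split; first by rewrite linearD /= Gs Ds.
move=> u u0; rewrite /qf mulmxDr mulmxDl addE.
by apply: ltr_wpDl (Gp u) (Dp u u0).
Qed.

Lemma Delta_posdef n n' p : (p < n)%N -> (p < n')%N -> posdef (@Delta R n n' p).
Proof.
move=> hn hn'; rewrite /Delta; set d := \row_i _.
have dpos : forall i, 0 < d 0 i.
  move=> i; rewrite mxE; case: split => _; rewrite invr_gt0 mulr_gt0 // ltr0n subn_gt0 //.
split; first by rewrite tr_diag_mx.
move=> u u0.
have -> : qf (diag_mx d) u = \sum_j d 0 j * u j 0 ^+ 2.
  rewrite /qf mul_mx_diag mxE; apply: eq_bigr => j _; rewrite !mxE; ring.
have hge : forall j, 0 <= d 0 j * u j 0 ^+ 2.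
  by move=> j; rewrite mulr_ge0 ?sqr_ge0 // ltW.
rewrite lt_def sumr_ge0 // andbT.
apply/negP => /eqP hs.
move/negP: u0; apply; apply/eqP/matrixP => i j.
rewrite ord1 mxE.
have := psumr_eq0P (P := predT) (fun j _ => hge j) hs (i := i) isT.
move/eqP; rewrite mulf_eq0 gt_eqF //= sqrf_eq0 => /eqP.
by [].
Qed.

Lemma gbounds n n' p (G K : 'M[R]_((n - p) + (n' - p))) :
  (p < n)%N -> (p < n')%N -> psd G -> psd (K - G) ->
  gfun G <= gfun K /\ gfun K <= gfun G + frob (grad_g G) * frob (K - G).
Proof.
move=> hn hn' Gpsd Epsd.
have Dpd := posdef_inv (Delta_posdef hn hn').
have Ppd := psd_posdef_add Gpsd Dpd.
have [h0 [h1 h2]] := key Ppd Epsd.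
have eK : K + invmx (Delta n n' p) = G + invmx (Delta n n' p) + (K - G).
  by rewrite [RHS]addrC addrA subrK.
rewrite /gfun eK.
have hPE : 0 < \det (G + invmx (Delta n n' p) + (K - G)) by apply: lt_le_trans h1.
split.
  by rewrite ler_ln // qualifE /=.
apply: le_trans (_ : ln (\det (G + invmx (Delta n n' p)) *
   expR (\tr (invmx (G + invmx (Delta n n' p)) *m (K - G)))) <= _).
  by rewrite ler_ln // qualifE /= ?mulr_gt0 ?expR_gt0.
rewrite lnM ?qualifE /= ?expR_gt0 // expRK lerD2l.
exact: tr_frob.
Qed.

Lemma arith1 (C u1 u2 v1 v2 : R) : u1 <= v1 -> u2 <= v2 ->
  -(C + (v1 + v2)) <= - C - (u1 + u2).
Proof. lra. Qed.
Lemma arith2 (C u1 u2 v1 v2 w1 w2 : R) : v1 <= u1 + w1 -> v2 <= u2 + w2 ->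
  - C - (u1 + u2) <= (w1 + w2) + -(C + (v1 + v2)).
Proof. lra. Qed.
End S.
Unset Implicit Arguments. Set Strict Implicit.


Theorem theorem3 (R : realType) (X : Type) (p n n' : nat) (alpha : R)
  (kappa1 : {ffun 'I_p -> X} -> {ffun 'I_p -> X} -> R) (kappa2 : X -> X -> R)
  (x : 'I_n -> X) (x' : 'I_n' -> X)
  (G1 G2 : 'M[R]_((n - p) + (n' - p))) :
  (1 <= p)%N -> 0 < alpha -> alpha <= 1 ->
  pd_kernel kappa1 -> pd_kernel kappa2 ->
  (p < n)%N -> (p < n')%N ->
  psd G1 -> psd G2 ->
  loewner_le G1 (K1 kappa1 x x') ->
  loewner_le G2 (K1 kappa1 x x' + K2 kappa2 x x') ->
  let eps1 := K1 kappa1 x x' - G1 in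
  let eps2 := K1 kappa1 x x' + K2 kappa2 x x' - G2 in
  let rho := expR ((1 - alpha) * frob (grad_g G1) * frob eps1
                   + alpha * frob (grad_g G2) * frob eps2) - 1 in
  expR (- phi_kappa alpha kappa1 kappa2 x x')
    <= expR (- @Cnn R n n' p - ffun_ alpha G1 G2)
  /\ expR (- @Cnn R n n' p - ffun_ alpha G1 G2)
    <= (1 + rho) * expR (- phi_kappa alpha kappa1 kappa2 x x').
Proof.
move=> hp ha0 ha1 _ _ hn hn' G1psd G2psd hK1 hK2 eps1 eps2 rho.
have [a1 b1] := gbounds hn hn' G1psd hK1.
have [a2 b2] := gbounds hn hn' G2psd hK2.
have hb : 0 <= 1 - alpha by lra.
have ha : 0 <= alpha by lra.
have c1 := ler_wpM2l hb a1. have c2 := ler_wpM2l ha a2.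
have d1 := ler_wpM2l hb b1. have d2 := ler_wpM2l ha b2.
rewrite /rho /phi_kappa /ffun_ /eps1 /eps2.
rewrite mulrDr !mulrA in d1. rewrite mulrDr !mulrA in d2.
split.
  by rewrite ler_expR; apply: arith1.
rewrite addrCA subrr addr0 -expRD ler_expR; exact: arith2 d1 d2.
Qed.
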